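(* Let $m,n$ be relatively prime positive integers and $\pi$ an $(m,n)$-Dyck path. Then \[ \sum_{p\in v_*(\pi)} k(p) \;=\; \sum_{p\in v^*(\pi)} k(p). \]
   Context: An $(m,n)$-Dyck path is a lattice path from $(0,0)$ to $(m,n)$ with steps $(1,0)$ (horizontal) and $(0,1)$ (vertical) staying weakly above the diagonal $y=\frac nm x$. ''The line through a point $p$'' means the line through $p$ parallel to the diagonal. For a lattice point $p$, $k(p)$ is the number of vertical steps of $\pi$ not containing $p$ that the line through $p$ intersects. An outer vertex of $\pi$ is a vertex where a vertical step is followed by a horizontal step, an internal vertex one where a horizontal step is followed by a vertical step; $v^*(\pi)$ is the set of outer vertices except the one farthest from the diagonal, and $v_*(\pi)$ is the set of internal vertices. *)

(* Defs.v *)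
From mathcomp Require Import all_boot.
Set Implicit Arguments. Unset Strict Implicit. Unset Printing Implicit Defensive.

(* A lattice path is a sequence of steps: true = vertical step (0,1),
   false = horizontal step (1,0). *)

Definition vertex (s : seq bool) (i : nat) : nat * nat :=
  (count negb (take i s), count id (take i s)).

(* (m,n)-Dyck path: m horizontal steps, n vertical steps, every vertex
   (x,y) weakly above the diagonal y = (n/m) x, i.e. n*x <= m*y. *)
Definition dyck (m n : nat) (s : seq bool) : bool :=
  [&& count negb s == m, count id s == n &
      all (fun i => n * (vertex s i).1 <= m * (vertex s i).2) (iota 0 (size s).+1)].

(* The vertical step number j (i.e. nth false s j = true) goes from
   vertex s j to (vertex s j).1, (vertex s j).2 + 1. *)
Definition vstep (s : seq bool) (j : nat) : bool := nth false s j.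

(* The line through p parallel to y = (n/m)x meets the vertical segment
   from (x,y) to (x,y+1):  y <= p.2 + n/m (x - p.1) <= y+1, cleared of
   denominators. *)
Definition line_meets (m n : nat) (p : nat * nat) (x y : nat) : bool :=
  (m * y + n * p.1 <= m * p.2 + n * x) && (m * p.2 + n * x <= m * y + m + n * p.1).

Definition seg_contains (p : nat * nat) (x y : nat) : bool :=
  (p.1 == x) && (y <= p.2 <= y.+1).

Definition kval (m n : nat) (s : seq bool) (p : nat * nat) : nat :=
  count (fun j => [&& vstep s j,
                     line_meets m n p (vertex s j).1 (vertex s j).2 &
                     ~~ seg_contains p (vertex s j).1 (vertex s j).2])
        (iota 0 (size s)).

Definition outer (s : seq bool) (i : nat) : bool :=
  nth false s i.-1 && ~~ nth false s i.

Definition internal (s : seq bool) (i : nat) : bool :=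
  ~~ nth false s i.-1 && nth false s i.

(* Distance from the diagonal, up to the positive factor 1/sqrt(m^2+n^2):
   m*y - n*x (nonnegative on a Dyck path). *)
Definition level (m n : nat) (p : nat * nat) : nat := m * p.2 - n * p.1.

Definition max_outer_level (m n : nat) (s : seq bool) : nat :=
  \max_(1 <= i < size s | outer s i) level m n (vertex s i).

Definition outer_star (m n : nat) (s : seq bool) (i : nat) : bool :=
  outer s i && (level m n (vertex s i) != max_outer_level m n s).

(* Main.v *)
Require Import Defs.
From mathcomp Require Import all_boot.
From mathcomp Require Import all_order all_algebra zify ring lra.
Set Implicit Arguments. Unset Strict Implicit. Unset Printing Implicit Defensive.
Import Order.TTheory GRing.Theory Num.Theory.

Section Core.
Local Open Scope ring_scope.
Variables (N : nat) (d : nat -> bool) (L : nat -> nat).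
Hypothesis N2 : (1 < N)%N.
Hypothesis d0 : d 0 = true.
Hypothesis dN : d N.-1 = false.
Hypothesis up : forall j, (j < N)%N -> d j -> (L j < L j.+1)%N.
Hypothesis inj : forall i j, (i < N)%N -> (j < N)%N -> L i = L j -> i = j.
Hypothesis inj' : forall i j, (0 < i <= N)%N -> (0 < j <= N)%N -> L i = L j -> i = j.
Hypothesis L0 : L 0 = 0%N.
Hypothesis Lpos : forall q, (0 < q < N)%N -> (0 < L q)%N.

Definition b2z (b : bool) : int := (b : nat)%:Z.
Definition sg p : int := if p == 0%N then -1 else b2z (d p.-1) - b2z (d p).
Definition cc p : nat := (L p + (sg p == (-1)%R))%N.
Definition U c : int := \sum_(0 <= q < N) sg q * b2z (c <= L q)%N.
Definition CC p : int := \sum_(0 <= j < N) b2z (d j && (L j <= L p <= L j.+1)%N).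

Lemma sum_sg1 : \sum_(1 <= q < N) sg q = 1.
Proof.
rewrite (telescope_sumr_eq (fun q => - b2z (d q.-1))) //; last first.
  by move=> k /andP[k1 _]; rewrite /sg; case: k k1 => //= k _; rewrite opprK addrC.
  by apply: ltnW.
rewrite /= d0; case: N N2 dN => // N' _ /= ->; by [].
Qed.

Lemma sum_sg : \sum_(0 <= q < N) sg q = 0.
Proof. by rewrite big_ltn ?(ltnW N2) // sum_sg1 /sg eqxx addNr. Qed.

Lemma sbp c : \sum_(0 <= j < N) b2z (d j) * (b2z (c <= L j.+1)%N - b2z (c <= L j)%N) = U c.
Proof.
rewrite /U.
have -> : \sum_(0 <= j < N) b2z (d j) * (b2z (c <= L j.+1)%N - b2z (c <= L j)%N)
  = \sum_(0 <= j < N) b2z (d j) * b2z (c <= L j.+1)%N - \sum_(0 <= j < N) b2z (d j) * b2z (c <= L j)%N.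
  by rewrite -sumrB; apply: eq_bigr => j _; rewrite mulrBr.
case: N N2 dN => // N' _ dN'.
rewrite big_nat_recr //= dN' mul0r addr0.
rewrite !big_nat_recl // d0 /sg eqxx /=.
rewrite [X in _ = _ + X](eq_bigr (fun i => b2z (d i) * b2z (c <= L i.+1)%N - b2z (d i.+1) * b2z (c <= L i.+1)%N)); last by move=> i _; rewrite mulrBl.
rewrite sumrB /b2z /=; ring.
Qed.

Lemma CC_U p : (0 < p < N)%N -> sg p != 0 ->
  CC p = \sum_(0 <= j < N) b2z (d j) * (b2z (cc p <= L j.+1)%N - b2z (cc p <= L j)%N).
Proof.
move=> /andP[p0 pN] snz; rewrite /CC; apply: eq_big_nat => j /andP[_ jN].
case dj: (d j); last by rewrite /b2z mul0r.
have ujj := up jN dj.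
move: snz; rewrite /cc /sg; case: p p0 pN => // p' _ pN /=.
case dp': (d p'); case dp: (d p'.+1) => //= _.
- have ne : L j != L p'.+1.
    apply/eqP => e; have := inj jN pN e; move=> ej; by rewrite ej dp in dj.
  move: ne; rewrite /b2z; do ! case: leqP => ? /=; lia.
- have ne : L j.+1 != L p'.+1.
    apply/eqP => e; have jp : j.+1 = p'.+1 by apply: inj' e; lia.
    case: jp => jp; by rewrite jp dp' in dj.
  move: ne; rewrite /b2z; do ! case: leqP => ? /=; lia.
Qed.

Definition ee p : int := b2z (sg p == -1).
Definition pp p : int := b2z (sg p == 1).

Lemma sg_split p : sg p = pp p - ee p.
Proof. by rewrite /pp /ee /sg /b2z; case: (p == 0%N) => //; case: (d p.-1); case: (d p). Qed.

Lemma sg_sq p : sg p * sg p = pp p + ee p.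
Proof. by rewrite /pp /ee /sg /b2z; case: (p == 0%N) => //; case: (d p.-1); case: (d p). Qed.

Lemma sg_ee p : sg p * sg p * ee p = ee p.
Proof. by rewrite /pp /ee /sg /b2z; case: (p == 0%N) => //; case: (d p.-1); case: (d p). Qed.

Lemma sum_delta (F : nat -> int) p : (p < N)%N ->
  \sum_(0 <= q < N) F q * b2z (q == p) = F p.
Proof.
move=> pN.
rewrite (eq_big_nat _ _ (F2 := fun q => if q == p then F q else 0)); last first.
  by move=> q _; rewrite /b2z; case: (q == p); rewrite ?mulr1 ?mulr0.
by rewrite -big_mkcond big_nat1_eq /= pN.
Qed.

Lemma cc_split p q : (p < N)%N -> (q < N)%N ->
  b2z (cc p <= L q)%N = b2z (L p <= L q)%N - ee p * b2z (q == p).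
Proof.
move=> pN qN; rewrite /cc /ee.
case: (sg p == -1) => /=; last by rewrite mul0r subr0 addn0.
case: (eqVneq q p) => [->|nqp]; first by rewrite /b2z leqnn addn1 ltnn /=.
have ne : L q != L p by apply/eqP => e; move: nqp; rewrite (inj qN pN e) eqxx.
move: ne; rewrite /b2z mul1r subr0; case: leqP => ? /=; case: leqP => ? /=; lia.
Qed.

Lemma sum_pp_ee : \sum_(0 <= p < N) pp p = \sum_(0 <= p < N) ee p.
Proof.
have := sum_sg; rewrite (eq_bigr _ (fun p _ => sg_split p)) sumrB => /eqP.
by rewrite subr_eq0 => /eqP.
Qed.

Lemma F4 : \sum_(0 <= p < N) sg p * U (cc p) = 0.
Proof.
pose A := \sum_(0 <= p < N) \sum_(0 <= q < N) sg p * sg q * b2z (L p <= L q)%N.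
pose B := \sum_(0 <= p < N) ee p.
have E1 : \sum_(0 <= p < N) sg p * U (cc p) = A - B.
  rewrite /A /B -sumrB; apply: eq_big_nat => p /andP[_ pN].
  rewrite /U mulr_sumr.
  rewrite (eq_big_nat _ _ (F2 := fun q => sg p * sg q * b2z (L p <= L q)%N -
     (sg p * sg p * ee p) * b2z (q == p))); last first.
    move=> q /andP[_ qN]; rewrite cc_split //.
    case: (eqVneq q p) => [->|nqp]; first by rewrite /b2z; ring.
    by rewrite /b2z /= !mulr0 !subr0 mulrA.
  by rewrite sumrB sum_delta // sg_ee.
have E2 : A + A = \sum_(0 <= p < N) (pp p + ee p).
  rewrite {2}/A exchange_big -big_split /=.
  have E3 : forall p, (p < N)%N -> \sum_(0 <= q < N) (sg p * sg q * b2z (L p <= L q)%N + sg q * sg p * b2z (L q <= L p)%N)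
     = \sum_(0 <= q < N) (sg p * sg q + sg p * sg q * b2z (q == p)).
    move=> p pN; apply: eq_big_nat => q /andP[_ qN].
    case: (eqVneq q p) => [->|nqp]; first by rewrite /b2z leqnn /=; ring.
    have ne : L q != L p by apply/eqP => e; move: nqp; rewrite (inj qN pN e) eqxx.
    rewrite /b2z /=.
    move: ne; case: leqP => ? /=; case: leqP => ? /= ?; try lia; ring.
  apply: eq_big_nat => p /andP[_ pN]; rewrite -big_split /= E3 // big_split /= sum_delta // -sg_sq.
  rewrite -mulr_sumr sum_sg mulr0 add0r //.
have E4 : A = B.
  move: E2; rewrite big_split /= sum_pp_ee -/B => E2; lia.
by rewrite E1 E4 subrr.
Qed.

Lemma core_main : \sum_(1 <= p < N) sg p * CC p = 1.
Proof.
have E : \sum_(1 <= p < N) sg p * CC p = \sum_(1 <= p < N) sg p * U (cc p).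
  apply: eq_big_nat => p pr.
  case: (eqVneq (sg p) 0) => [->|snz]; first by rewrite !mul0r.
  by rewrite CC_U // sbp.
have U1 : U (cc 0) = 1.
  rewrite /cc /sg eqxx /= L0 /U big_ltn ?(ltnW N2) // L0 /= /b2z /= mulr0 add0r.
  rewrite -sum_sg1; apply: eq_big_nat => q /andP[q1 qN].
  by rewrite Lpos ?q1 ?qN // mulr1.
have s0 : sg 0 = -1 by rewrite /sg eqxx.
have := F4; rewrite big_ltn ?(ltnW N2) // U1 mulr1 s0 => H.
rewrite E; move: H => /eqP; rewrite addrC subr_eq0 => /eqP; exact.
Qed.

End Core.


Section Bridge.
Variables (m n : nat) (s : seq bool).
Hypothesis m0 : 0 < m.
Hypothesis n0 : 0 < n.
Hypothesis cop : coprime m n.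
Hypothesis dy : dyck m n s.

Local Notation N := (size s).
Local Notation d := (nth false s).
Local Notation x i := (vertex s i).1.
Local Notation y i := (vertex s i).2.
Local Notation Lv i := (level m n (vertex s i)).

Lemma cntm : count negb s = m. Proof. by case/and3P: dy => /eqP. Qed.
Lemma cntn : count id s = n. Proof. by case/and3P: dy => _ /eqP. Qed.
Lemma sizeN : N = m + n.
Proof. by rewrite -cntm -cntn addnC -(count_predC id) ; congr (_ + _). Qed.

Lemma xy i : i <= N -> x i + y i = i.
Proof.
move=> iN; rewrite /vertex /= addnC -[count negb _](_ : count (predC id) (take i s) = _) //.
by rewrite count_predC size_take; case: ltnP => //; lia.
Qed.

Lemma vstepE j : j < N -> vertex s j.+1 = if d j then (x j, (y j).+1) else ((x j).+1, y j).
Proof.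
move=> jN; rewrite /vertex (take_nth false) // -cats1 !count_cat /=.
by case: (d j); rewrite /= ?addn0 ?addn1.
Qed.

Lemma dyV i : i <= N -> n * x i <= m * y i.
Proof.
move=> iN; case/and3P: dy => _ _ /allP; apply; by rewrite mem_iota.
Qed.

Lemma vN : vertex s N = (m, n).
Proof. by rewrite /vertex take_size cntm cntn. Qed.

Lemma LvE i : i <= N -> Lv i + n * x i = m * y i.
Proof. move=> iN; have := dyV iN; rewrite /level; lia. Qed.

Lemma Lup j : j < N -> d j -> Lv j.+1 = Lv j + m.
Proof.
move=> jN dj; have := LvE (ltnW jN); have := LvE jN; rewrite vstepE // dj /=; nia.
Qed.

Lemma Ldown j : j < N -> ~~ d j -> Lv j.+1 + n = Lv j.
Proof.
move=> jN dj; have := LvE (ltnW jN); have := LvE jN; rewrite vstepE // (negbTE dj) /=; nia.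
Qed.

Lemma L0 : Lv 0 = 0.
Proof. by rewrite /level /vertex take0 /= !muln0. Qed.

Lemma LN : Lv N = 0.
Proof. by rewrite vN /level /= mulnC subnn. Qed.

Lemma Linj i j : i < N -> j < N -> Lv i = Lv j -> i = j.
Proof.
wlog: i j / i <= j.
  move=> H iN jN e; case: (leqP i j) => h; first exact: H.
  by symmetry; apply: H => //; apply: ltnW.
move=> ij iN jN e; apply/eqP; rewrite eqn_leq ij /=; apply/negP => lt.
have Ei := LvE (ltnW iN); have Ej := LvE (ltnW jN).
have Xi := xy (ltnW iN); have Xj := xy (ltnW jN).
have key : n * (j - i) = (m + n) * (y j - y i) by nia.
have cop' : coprime (m + n) n by rewrite /coprime gcdnC gcdnDr gcdnC.
have : (m + n) %| (j - i).
  by rewrite -(Gauss_dvdr _ cop') key dvdn_mulr.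
move=> /dvdn_leq H; have : m + n <= j - i by apply: H; lia.
rewrite -sizeN; lia.
Qed.

Lemma N2 : 1 < N.
Proof. rewrite sizeN; lia. Qed.

Lemma d0 : d 0 = true.
Proof.
case e: (d 0) => //; have := dyV (i:=1) (ltnW N2).
rewrite (vstepE (ltnW N2)) e /vertex take0 /=; lia.
Qed.

Lemma dN : d N.-1 = false.
Proof.
have NN : N.-1 < N by have := N2; lia.
case e: (d N.-1) => //; have := dyV (ltnW NN).
have := vN; rewrite -{1}(ltn_predK NN) (vstepE NN) e => -[ex ey]; rewrite /vertex /= => H; nia.
Qed.

Lemma upL j : j < N -> d j -> Lv j < Lv j.+1.
Proof. by move=> jN dj; rewrite (Lup jN dj); lia. Qed.

Lemma inj' i j : 0 < i <= N -> 0 < j <= N -> Lv i = Lv j -> i = j.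
Proof.
move=> /andP[i0 iN] /andP[j0 jN] e.
case: (ltnP i N) => iN'; case: (ltnP j N) => jN'.
- exact: Linj.
- have ej : j = N by lia.
  by move: e; rewrite ej LN -L0 => /(Linj iN' (ltnW N2)); lia.
- have ei : i = N by lia.
  by move: e; rewrite ei LN -L0 => /esym /(Linj jN' (ltnW N2)); lia.
- lia.
Qed.

Lemma Lpos q : 0 < q < N -> 0 < Lv q.
Proof.
move=> /andP[q0 qN]; rewrite lt0n; apply/eqP => e.
by move: e; rewrite -L0 => /(Linj qN (ltnW N2)); lia.
Qed.

Lemma kterm p j : 0 < p < N -> j < N ->
  ([&& vstep s j, line_meets m n (vertex s p) (x j) (y j) & ~~ seg_contains (vertex s p) (x j) (y j)] : nat)
  + (j == p) * d p + (j == p.-1) * d p.-1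
  = (d j && (Lv j <= Lv p <= Lv j.+1)).
Proof.
move=> /andP[p0 pN] jN; rewrite /vstep /line_meets /seg_contains.
have Ej := LvE (ltnW jN); have Ep := LvE (ltnW pN).
have Xj := xy (ltnW jN); have Xp := xy (ltnW pN).
have noc : j != p -> j != p.-1 -> ((x p == x j) && (y j <= y p <= (y j).+1)) = false.
  move=> h1 h2; apply/negP => /andP[/eqP ex /andP[h3 h4]]; lia.
have meq : (m * y j + n * x p <= m * y p + n * x j <= m * y j + m + n * x p) = (Lv j <= Lv p <= Lv j + m).
  apply/idP/idP => /andP[h1 h2]; apply/andP; split; lia.
rewrite meq.
case: (eqVneq j p) => [ejp|njp].
  subst j; have -> : (p == p.-1) = false by lia.
  rewrite eqxx leqnn leqnSn /=.
  case dp: (d p) => /=; last by []. by rewrite (Lup pN dp) leq_addr leqnn.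
case: (eqVneq j p.-1) => [ejp1|njp1].
  have pj : p = j.+1 by lia.
  subst p; case dj: (d j) => //=.
  rewrite (Lup jN dj) leqnn leq_addr /=.
  have := vstepE jN; rewrite dj /vertex /= => -[cx cy].
  rewrite cx cy eqxx leqnSn leqnn. by [].
rewrite noc //= !mul0n !addn0.
case dj: (d j) => //=; by rewrite (Lup jN dj) andbT.
Qed.

Lemma count_iota_sum (P : pred nat) k : count P (iota 0 k) = \sum_(0 <= j < k) P j.
Proof.
rewrite -sum1_count /index_iota subn0 big_mkcond; apply: eq_bigr => j _; by case: (P j).
Qed.

Lemma delta_nat k p c : p < k -> \sum_(0 <= j < k) (j == p) * c = c.
Proof.
move=> pk; rewrite (eq_bigr (fun j => if j == p then c else 0)); last first.
  by move=> j _; case: (j == p); rewrite ?mul1n ?mul0n.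
by rewrite -big_mkcond big_nat1_eq /= pk.
Qed.

Lemma kvalE p : 0 < p < N ->
  kval m n s (vertex s p) + d p + d p.-1 = \sum_(0 <= j < N) (d j && (Lv j <= Lv p <= Lv j.+1)).
Proof.
move=> pr; have pN : p < N by case/andP: pr.
have p1N : p.-1 < N by lia.
rewrite /kval count_iota_sum -(delta_nat (d p) pN) -(delta_nat (d p.-1) p1N) -!big_split /=.
by apply: eq_big_nat => j /andP[_ jN]; rewrite -(kterm pr jN) => //.
Qed.

Lemma argmax_ex (f : nat -> nat) k : 0 < k -> exists i0, 0 < i0 < k.+1 /\ forall j, 0 < j < k.+1 -> f j <= f i0.
Proof.
elim: k => // k IH _; case: (posnP k) => [->|kp].
  by exists 1; split => // j jr; have -> : j = 1 by lia.
have [i0 [h1 h2]] := IH kp.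
case: (leqP (f k.+1) (f i0)) => h.
  exists i0; split; first lia.
  move=> j jr; case: (eqVneq j k.+1) => [->//|ne]; apply: h2; lia.
exists k.+1; split; first lia.
move=> j jr; case: (eqVneq j k.+1) => [->//|ne]; have := h2 j; lia.
Qed.

Lemma global_max : exists i0, 0 < i0 < N /\ outer s i0 /\ forall j, j <= N -> Lv j <= Lv i0.
Proof.
have N1 : 0 < N.-1 by have := N2; lia.
have [i0 [h1 h2]] := argmax_ex (fun j => Lv j) N1.
have NN : N.-1.+1 = N by have := N2; lia.
rewrite NN in h1 h2.
exists i0; split => //; split.
  rewrite /outer; apply/andP; split.
    case e: (d i0.-1) => //; exfalso.
    case: (eqVneq i0 1) => [e1|ne1]; first by move: e; rewrite e1 d0.
    have i1N : i0.-1 < N by lia.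
    have := Ldown i1N (negbT e); rewrite prednK; last lia.
    have := h2 i0.-1; lia.
  case e: (d i0) => //; exfalso.
  case: (eqVneq i0 N.-1) => [e1|ne1]; first by move: e; rewrite e1 dN.
  have i1N : i0 < N by lia.
  have := Lup i1N e; have := h2 i0.+1; lia.
move=> j jN; case: (posnP j) => [->|j0]; first by rewrite L0.
case: (eqVneq j N) => [->|ne]; first by rewrite LN.
apply: h2; lia.
Qed.

Lemma kmax i : 0 < i < N -> outer s i -> level m n (vertex s i) = max_outer_level m n s ->
  kval m n s (vertex s i) = 0.
Proof.
move=> ir oi em.
have [i0 [i0r [oi0 hi0]]] := global_max.
have le0 : Lv i0 <= Lv i.
  rewrite em /max_outer_level; apply: (leq_bigmax_seq (F := fun i => level m n (vertex s i))) => //.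
  by rewrite mem_index_iota.
move: oi; rewrite /outer => /andP[di1 di].
have := kvalE ir; rewrite (negbTE di) di1 /= addn0.
have i1N : i.-1 < N by lia.
rewrite (eq_big_nat _ _ (F2 := fun j => (j == i.-1) * 1)).
  by rewrite delta_nat //; lia.
move=> j /andP[_ jN].
case: (eqVneq j i.-1) => [->|ne].
  rewrite di1 /= prednK; last lia.
  rewrite leqnn andbT; have := upL i1N di1; rewrite prednK; last lia. lia.
case dj: (d j) => //=.
have hj := upL jN dj; have hj1 := hi0 j.+1 jN.
have : Lv j.+1 != Lv i.
  apply/eqP => e; have := inj' (i:=j.+1) (j:=i) _ _ e; lia.
lia.
Qed.

End Bridge.

Theorem mainTheorem4 (m n : nat) (s : seq bool) :
  0 < m -> 0 < n -> coprime m n -> dyck m n s ->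
  \sum_(1 <= i < size s | internal s i) kval m n s (vertex s i) =
  \sum_(1 <= i < size s | outer_star m n s i) kval m n s (vertex s i).
Proof.
move=> m0 n0 cop dy.
have E1 : \sum_(1 <= i < size s | outer_star m n s i) kval m n s (vertex s i)
        = \sum_(1 <= i < size s | outer s i) kval m n s (vertex s i).
  rewrite big_mkcond [in RHS]big_mkcond; apply: eq_big_nat => i ir.
  rewrite /outer_star; case oi: (outer s i) => //=.
  by case: eqP => //= em; rewrite (kmax m0 n0 cop dy ir oi em).
rewrite E1; apply/eqP; rewrite -eqz_nat -subr_eq0.
have C := core_main (N := size s) (d := nth false s) (L := fun i => level m n (vertex s i))
   (N2 m0 n0 cop dy) (d0 m0 n0 cop dy) (dN m0 n0 cop dy) (upL m0 n0 cop dy)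
   (Linj m0 n0 cop dy) (inj' m0 n0 cop dy) (L0 m n s) (Lpos m0 n0 cop dy).
have S1 := sum_sg1 (N2 m0 n0 cop dy) (d0 m0 n0 cop dy) (dN m0 n0 cop dy).
rewrite !(big_morph Posz PoszD (erefl (Posz 0))) /=.
rewrite big_mkcond [X in (_ - X)%R]big_mkcond /= -sumrB.
rewrite (eq_big_nat _ _ (F2 := fun i => (sg (nth false s) i - sg (nth false s) i * CC (size s) (nth false s) (fun i => level m n (vertex s i)) i)%R)).
  by rewrite sumrB C S1 subrr.
move=> i ir.
have K := kvalE m0 n0 cop dy ir.
have CCe : CC (size s) (nth false s) (fun i => level m n (vertex s i)) i =
   Posz (kval m n s (vertex s i) + nth false s i + nth false s i.-1).
  by rewrite K /CC (big_morph Posz PoszD (erefl (Posz 0))).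
rewrite CCe /outer /internal /sg.
have -> : (i == 0) = false by lia.
case: (nth false s i.-1); case: (nth false s i) => /=; rewrite /b2z /=; lia.
Qed.
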